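(* Let $f:\mathbb{R}^n\to\mathbb{R}$ be convex and $L$-smooth for some $L>0$, and suppose $f$ has a minimizer $x^\star\in\mathbb{R}^n$. Let $\{x^k\}$, $\{t_k\}$ be generated by APBM with models $\hat f^k$ satisfying, for every $k\ge1$: (a) $\hat f^k$ is convex; (b) $\hat f^k(x)\ge f(y^k)+\langle\nabla f(y^k),x-y^k\rangle$ for all $x\in\mathbb{R}^n$; (c) $\hat f^k(x)\le f(x)$ for all $x\in\mathbb{R}^n$. Then for every $k\ge1$, $$f(x^k)-f(x^\star)\le\frac{L\|x^0-x^\star\|^2}{2t_k^2}.$$
   Context: APBM (accelerated proximal bundle method) for minimizing $f$: given $L>0$ and an initial point $x^0\in\mathbb{R}^n$, set $y^1=x^0$ and $t_1=1$. For $k=1,2,\dots$, given a model $\hat f^k:\mathbb{R}^n\to\mathbb{R}$, set $x^k=\arg\min_{x\in\mathbb{R}^n}\ \hat f^k(x)+\frac{L}{2}\|x-y^k\|^2$, $t_{k+1}=\frac{1+\sqrt{1+4t_k^2}}{2}$, $y^{k+1}=x^k+\frac{t_k-1}{t_{k+1}}(x^k-x^{k-1})$. A differentiable $f$ is $L$-smooth if $\|\nabla f(x)-\nabla f(y)\|\le L\|x-y\|$ for all $x,y\in\mathbb{R}^n$ (Euclidean norm). *)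

(* Defs.v *)
From HB Require Import structures.
From mathcomp Require Import all_boot all_order all_algebra.
From mathcomp Require Import all_classical all_reals all_analysis.
Set Implicit Arguments. Unset Strict Implicit. Unset Printing Implicit Defensive.
Import Order.TTheory GRing.Theory Num.Theory.
Import numFieldNormedType.Exports.
Local Open Scope ring_scope.

Definition dotv {R : realType} {n : nat} (u v : 'rV[R]_n) : R :=
  \sum_(i < n) u 0 i * v 0 i.
Definition enorm {R : realType} {n : nat} (u : 'rV[R]_n) : R :=
  Num.sqrt (dotv u u).

Definition grad {R : realType} {n : nat} (f : 'rV[R]_n -> R) (x : 'rV[R]_n)
  : 'rV[R]_n := \row_(i < n) ('D_(delta_mx 0 i) f) x.

Definition convex_fun {R : realType} {n : nat} (f : 'rV[R]_n -> R) : Prop :=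
  forall (x y : 'rV[R]_n) (l : R), 0 <= l -> l <= 1 ->
    f (l *: x + (1 - l) *: y) <= l * f x + (1 - l) * f y.

Definition L_smooth {R : realType} {n : nat} (L : R) (f : 'rV[R]_n -> R) : Prop :=
  (forall x, differentiable f x) /\
  forall x y, enorm (grad f x - grad f y) <= L * enorm (x - y).

Definition APBM {R : realType} {n : nat} (L : R)
  (fhat : nat -> 'rV[R]_n -> R) (x y : nat -> 'rV[R]_n) (t : nat -> R) : Prop :=
  y 1%N = x 0%N /\ t 1%N = 1 /\
  forall k : nat, (1 <= k)%N ->
    (forall z, fhat k (x k) + L / 2 * enorm (x k - y k) ^+ 2
               <= fhat k z + L / 2 * enorm (z - y k) ^+ 2) /\
    t k.+1 = (1 + Num.sqrt (1 + 4 * t k ^+ 2)) / 2 /\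
    y k.+1 = x k + ((t k - 1) / t k.+1) *: (x k - x k.-1).

(* Main.v *)
Require Import Defs.
From HB Require Import structures.
From mathcomp Require Import all_boot all_order all_algebra.
From mathcomp Require Import all_classical all_reals all_analysis.
From mathcomp Require Import ring lra.
Import Order.TTheory GRing.Theory Num.Theory.
Import numFieldNormedType.Exports.
Local Open Scope ring_scope.
Set Implicit Arguments. Unset Strict Implicit.

Section S.
Variables (R : realType) (n : nat).
Implicit Types (u v w : 'rV[R]_n).

Lemma dF (f : 'rV[R]_n -> R) a d : differentiable f a -> 'D_d f a = dotv (grad f a) d.
Proof.
move=> df; rewrite deriveE // /dotv {1}(row_sum_delta d) linear_sum.
apply: eq_bigr => i _; rewrite linearZ /= mxE deriveE // mulrC.
by [].
Qed.

Lemma derive_line (f : 'rV[R]_n -> R) y d s : differentiable f (y + s *: d) ->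
  is_derive s 1 (fun s : R => f (y + s *: d)) ('D_d f (y + s *: d)).
Proof.
move=> df.
have e : (fun h : R => h^-1 *: (((fun s : R => f (y + s *: d)) \o shift s) (h *: 1) - f (y + s *: d)))
   = (fun h => h^-1 *: ((f \o shift (y + s *: d)) (h *: d) - f (y + s *: d))).
  apply: funext => h /=; congr (_ *: (f _ - _)).
  by rewrite [_%:A]mulr1 scalerDl addrCA.
split; first by rewrite /derivable e; exact: diff_derivable.
by rewrite /derive e.
Qed.
Lemma polyd (c k s : R) : is_derive s 1 (fun s => c * s + k * s ^+ 2) (c + k * (2 * s)).
Proof.
have e : (fun s => c * s + k * s ^+ 2) = (c \*: id) + (k \*: (id ^+ 2)).
  by apply: funext => x /=; rewrite !fctE.
rewrite e; apply: is_derive_eq.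
rewrite /= expr1 ; rewrite ![_%:A]mulr1; by [] .
Qed.

Implicit Types (a d : 'rV[R]_n).
Lemma dotvC u v : dotv u v = dotv v u.
Proof. by apply: eq_bigr => i _; rewrite mulrC. Qed.
Lemma dotvDl u v w : dotv (u + v) w = dotv u w + dotv v w.
Proof. by rewrite /dotv -big_split; apply: eq_bigr => i _; rewrite mxE mulrDl. Qed.
Lemma dotvZl c u w : dotv (c *: u) w = c * dotv u w.
Proof. by rewrite /dotv mulr_sumr; apply: eq_bigr => i _; rewrite mxE mulrA. Qed.
Lemma dotvNl u w : dotv (- u) w = - dotv u w.
Proof. by rewrite /dotv -sumrN; apply: eq_bigr => i _; rewrite mxE mulNr. Qed.
Lemma dotvBl u v w : dotv (u - v) w = dotv u w - dotv v w.
Proof. by rewrite dotvDl dotvNl. Qed.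
Lemma dotvDr u v w : dotv w (u + v) = dotv w u + dotv w v.
Proof. by rewrite dotvC dotvDl !(dotvC w). Qed.
Lemma dotvZr c u w : dotv w (c *: u) = c * dotv w u.
Proof. by rewrite dotvC dotvZl dotvC. Qed.
Lemma dotvNr u w : dotv w (- u) = - dotv w u.
Proof. by rewrite dotvC dotvNl dotvC. Qed.
Lemma dotvBr u v w : dotv w (u - v) = dotv w u - dotv w v.
Proof. by rewrite dotvDr dotvNr. Qed.
Lemma dotv_ge0 u : 0 <= dotv u u.
Proof. by apply: sumr_ge0 => i _; rewrite -expr2 sqr_ge0. Qed.
Lemma enorm2 u : enorm u ^+ 2 = dotv u u.
Proof. by rewrite /enorm sqr_sqrtr // dotv_ge0. Qed.

Lemma cs_le a d (m : R) : 0 < m -> dotv a a <= m ^+ 2 * dotv d d -> dotv a d <= m * dotv d d.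
Proof.
move=> m0 H.
have H2 : 2 * m * dotv a d <= dotv a a + m ^+ 2 * dotv d d.
  rewrite /dotv !mulr_sumr -big_split; apply: ler_sum => i _ /=.
  rewrite -subr_ge0.
  have -> : a 0 i * a 0 i + m ^+ 2 * (d 0 i * d 0 i) - 2 * m * (a 0 i * d 0 i)
     = (a 0 i - m * d 0 i) ^+ 2 by ring.
  exact: sqr_ge0.
have dd0 := dotv_ge0 d.
nra.
Qed.

Lemma descent (f : 'rV[R]_n -> R) (L : R) y z : L_smooth L f -> 0 < L ->
  f z <= f y + dotv (grad f y) (z - y) + L / 2 * dotv (z - y) (z - y).
Proof.
case=> fd fl L0.
set d := z - y; set c := dotv (grad f y) d; set k := L / 2 * dotv d d.
pose g := (fun s : R => f (y + s *: d)) - (fun s => c * s + k * s ^+ 2).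
have gd (s : R) : is_derive s 1 g ('D_d f (y + s *: d) - (c + k * (2 * s))).
  by apply: is_deriveB; [exact: derive_line | exact: polyd].
have gdec : g 1 <= g 0.
  apply: (@ler0_derive1_le_cc _ g 0 1).
  - by move=> s _; case: (gd s).
  - move=> s; rewrite in_itv /= => /andP[s0 s1].
    rewrite derive1E; case: (gd s) => _ ->.
    rewrite dF // /c /k.
    have e : y + s *: d - y = s *: d by rewrite addrAC subrr add0r.
    have H := fl (y + s *: d) y; rewrite e in H.
    have H2 := ler_pM (sqrtr_ge0 _) (sqrtr_ge0 _) H H.
    rewrite -!expr2 enorm2 exprMn enorm2 dotvZl dotvZr in H2.
    have := @cs_le (grad f (y + s *: d) - grad f y) d (L * s) (mulr_gt0 L0 s0).
    have H2' : dotv (grad f (y + s *: d) - grad f y) (grad f (y + s *: d) - grad f y)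
       <= (L * s) ^+ 2 * dotv d d.
      by have -> : (L * s) ^+ 2 * dotv d d = L ^+ 2 * (s * (s * dotv d d)) by ring.
    move=> /(_ H2') H3.
    rewrite dotvBl in H3.
    have -> : L / 2 * dotv d d * (2 * s) = L * s * dotv d d by field.
    lra.
  - by apply: derivable_within_continuous => s _; case: (gd s).
  - by rewrite in_itv /= lexx ler01.
  - by rewrite in_itv /= lexx ler01.
  - exact: ler01.
move: gdec; rewrite /g !fctE scale0r addr0 scale1r.
have -> : y + d = z by rewrite /d addrC subrK.
rewrite expr1n expr0n /= !mulr1 !mulr0; lra.
Qed.

Lemma ddD a d : dotv (a + d) (a + d) = dotv a a + 2 * dotv a d + dotv d d.
Proof. rewrite dotvDl !dotvDr (dotvC d a); ring. Qed.

Lemma ddZ c a : dotv (c *: a) (c *: a) = c ^+ 2 * dotv a a.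
Proof. by rewrite dotvZl dotvZr mulrA expr2. Qed.

Lemma three_point (h : 'rV[R]_n -> R) (L : R) xk yk z : 0 < L -> convex_fun h ->
  (forall w, h xk + L / 2 * enorm (xk - yk) ^+ 2 <= h w + L / 2 * enorm (w - yk) ^+ 2) ->
  h xk + L / 2 * dotv (xk - yk) (xk - yk) + L / 2 * dotv (z - xk) (z - xk)
    <= h z + L / 2 * dotv (z - yk) (z - yk).
Proof.
move=> L0 hconv hmin.
set u := xk - yk; set w := z - xk.
set A := h z - h xk + L * dotv u w; set D := dotv w w.
have D0 : 0 <= D := dotv_ge0 w.
have key lam : 0 < lam -> lam <= 1 -> 0 <= A + L / 2 * lam * D.
  move=> l0 l1.
  have cv := hconv z xk lam (ltW l0) l1.
  have mn := hmin (lam *: z + (1 - lam) *: xk).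
  have e : lam *: z + (1 - lam) *: xk - yk = u + lam *: w.
    by apply/rowP => i; rewrite !mxE; ring.
  rewrite e !enorm2 (ddD u) ddZ dotvZr in mn.
  have : 0 <= lam * (A + L / 2 * lam * D).
    rewrite /A /D; nra.
  by rewrite pmulr_rge0.
have A0 : 0 <= A.
  rewrite leNgt; apply/negP => An.
  have P : 0 < - A + L * D by have := mulr_ge0 (ltW L0) D0; lra.
  set lam := - A / (- A + L * D).
  have l0 : 0 < lam by rewrite /lam divr_gt0 // oppr_gt0.
  have l1 : lam <= 1 by rewrite /lam ler_pdivrMr // mul1r; have := mulr_ge0 (ltW L0) D0; lra.
  have K := key lam l0 l1.
  have e : (- A + L * D) * (A + L / 2 * lam * D) = A * (- A + L * D) + L / 2 * (- A) * D.
    rewrite /lam; field; exact: lt0r_neq0.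
  have := mulr_ge0 (ltW P) K; rewrite e => H.
  have LD := mulr_ge0 (ltW L0) D0.
  nra.
have e : z - yk = w + u by rewrite /w /u addrA subrK.
rewrite e (ddD w) (dotvC w u).
move: A0; rewrite /A /D; nra.
Qed.

Lemma KI (f : 'rV[R]_n -> R) (fh : 'rV[R]_n -> R) (L : R) xk yk z :
  0 < L -> L_smooth L f -> convex_fun fh ->
  (forall w, fh xk + L / 2 * enorm (xk - yk) ^+ 2 <= fh w + L / 2 * enorm (w - yk) ^+ 2) ->
  (forall w, f yk + dotv (grad f yk) (w - yk) <= fh w) ->
  (forall w, fh w <= f w) ->
  f xk <= f z + L / 2 * (dotv (z - yk) (z - yk) - dotv (z - xk) (z - xk)).
Proof.
move=> L0 sm cv mn lo up.
have d := descent yk xk sm L0.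
have l := lo xk.
have tp := three_point z L0 cv mn.
have u := up z.
lra.
Qed.

Lemma ddN a d : dotv (a - d) (a - d) = dotv (d - a) (d - a).
Proof. by rewrite -opprB dotvNl dotvNr opprK. Qed.

End S.

Unset Implicit Arguments. Set Strict Implicit.

Theorem theorem1 (R : realType) (n : nat) (f : 'rV[R]_n -> R) (L : R)
  (xstar : 'rV[R]_n)
  (fhat : nat -> 'rV[R]_n -> R) (x y : nat -> 'rV[R]_n) (t : nat -> R) :
  0 < L ->
  convex_fun f ->
  L_smooth L f ->
  (forall z, f xstar <= f z) ->
  APBM L fhat x y t ->
  (forall k : nat, (1 <= k)%N ->
     convex_fun (fhat k) /\
     (forall z, f (y k) + dotv (grad f (y k)) (z - y k) <= fhat k z) /\
     (forall z, fhat k z <= f z)) ->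
  forall k : nat, (1 <= k)%N ->
    f (x k) - f xstar <= L * enorm (x 0%N - xstar) ^+ 2 / (2 * t k ^+ 2).
Proof.
move=> L0 fconv fsm fmin [y1 [t1 Hit]] Hmod.
have KIk k z : (1 <= k)%N ->
    f (x k) <= f z + L / 2 * (dotv (z - y k) (z - y k) - dotv (z - x k) (z - x k)).
  move=> k1; have [cv [lo up]] := Hmod k k1; have [mn _] := Hit k k1.
  exact: KI L0 fsm cv mn lo up.
have tge1 k : (1 <= k)%N -> 1 <= t k.
  elim: k => [//|[|k] IH _]; first by rewrite t1.
  have [_ [-> _]] := Hit k.+1 isT.
  have s1 : 1 <= Num.sqrt (1 + 4 * t k.+1 ^+ 2).
    rewrite -{1}sqrtr1 ler_sqrt; last by rewrite addr_ge0 // mulr_ge0 // sqr_ge0.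
    by rewrite lerDl mulr_ge0 // sqr_ge0.
  lra.
have trec k : (1 <= k)%N -> t k.+1 ^+ 2 - t k.+1 = t k ^+ 2.
  move=> k1; have [_ [-> _]] := Hit k k1.
  set s := Num.sqrt _.
  have hs : s ^+ 2 = 1 + 4 * t k ^+ 2 by rewrite sqr_sqrtr // addr_ge0 // mulr_ge0 // sqr_ge0.
  have -> : t k ^+ 2 = (s ^+ 2 - 1) / 4 by rewrite hs; field.
  by field.
pose u k := t k *: x k - (t k - 1) *: x k.-1 - xstar.
pose E k := t k ^+ 2 * (f (x k) - f xstar) + L / 2 * dotv (u k) (u k).
have E1 : E 1%N <= L / 2 * dotv (x 0%N - xstar) (x 0%N - xstar).
  have H := KIk 1%N xstar isT.
  rewrite /E /u t1 subrr scale0r subr0 scale1r expr1n mul1r.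
  rewrite y1 (ddN xstar) (ddN xstar) in H.
  lra.
have Estep j : (1 <= j)%N -> E j.+1 <= E j.
  move=> j1.
  have [_ [_ ey]] := Hit j j1.
  have T1 := tge1 j.+1 isT.
  have T0 : t j.+1 != 0 by apply: lt0r_neq0; lra.
  pose l := (t j.+1)^-1.
  pose z := l *: xstar + (1 - l) *: x j.
  have l0 : 0 <= l by rewrite /l invr_ge0; lra.
  have l1 : l <= 1 by rewrite /l invf_le1 //; lra.
  have cv := fconv xstar (x j) l l0 l1.
  have H := KIk j.+1 z isT.
  have e1 : t j.+1 *: (z - y j.+1) = - u j.
    rewrite ey /z /u /l; apply/rowP => i; rewrite !mxE; field; exact: T0.
  have e2 : t j.+1 *: (z - x j.+1) = - u j.+1.
    rewrite /z /u /l /=; apply/rowP => i; rewrite !mxE; field; exact: T0.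
  have d1 : t j.+1 ^+ 2 * dotv (z - y j.+1) (z - y j.+1) = dotv (u j) (u j).
    by rewrite -ddZ e1 dotvNl dotvNr opprK.
  have d2 : t j.+1 ^+ 2 * dotv (z - x j.+1) (z - x j.+1) = dotv (u j.+1) (u j.+1).
    by rewrite -ddZ e2 dotvNl dotvNr opprK.
  have tr := trec j j1.
  have fm := fmin (x j).
  have T2 : 0 <= t j.+1 ^+ 2 by rewrite sqr_ge0.
  have H2 := ler_wpM2l T2 H.
  have H3 : t j.+1 ^+ 2 * (f z - f xstar) <= t j ^+ 2 * (f (x j) - f xstar).
    have : t j.+1 ^+ 2 * (1 - l) = t j ^+ 2 by rewrite -tr /l; field.
    move=> e3; rewrite -e3 -mulrA; apply: ler_wpM2l => //.
    move: cv; rewrite -/z; nra.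
  rewrite /E; move: H2.
  rewrite -d1 -d2 => H2'.
  nra.
have Eall k : (1 <= k)%N -> E k <= L / 2 * dotv (x 0%N - xstar) (x 0%N - xstar).
  elim: k => [//|[|k] IH _]; first exact: E1.
  exact: le_trans (Estep k.+1 isT) (IH isT).
move=> k k1.
have Tk := tge1 k k1.
have Tp : 0 < 2 * t k ^+ 2 by rewrite mulr_gt0 // exprn_gt0 //; lra.
rewrite ler_pdivlMr // enorm2.
have := Eall k k1; rewrite /E.
have := dotv_ge0 (u k).
nra.
Qed.
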